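(* Let $q$ be a power of $2$, let $m\equiv2\pmod4$ with $m\ge6$, and let $n=q^m+1$. Then the largest coset leader modulo $n$ is $\delta_{1,n}=\frac{q(q-1)(q^m+1)}{2(q^2+1)}$, and $|C_{\delta_{1,n}}|=4$.
   Context: For $0\le s\le n-1$, $C_s=\{sq^i\bmod n:i\ge0\}$ is the $q$-cyclotomic coset of $s$ modulo $n$; its least element is its coset leader; $\delta_{i,n}$ denotes the $i$-th largest coset leader modulo $n$. *)

(* Defs.v *)
From mathcomp Require Import all_boot.
Set Implicit Arguments. Unset Strict Implicit. Unset Printing Implicit Defensive.

(* The map x |-> x*q mod n on {0..n-1} is iterated, so all values of the
   orbit already occur for i < n; we list them without duplicates. *)
Definition cyc_coset (q n s : nat) : seq nat :=
  undup [seq (s * q ^ i) %% n | i <- iota 0 n].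

Definition coset_leader (q n s : nat) : bool :=
  all (fun x => s <= x) (cyc_coset q n s).

Definition delta1 (q n : nat) : nat :=
  \max_(s < n | coset_leader q n s) s.

(* Main.v *)
Require Import Defs.
From mathcomp Require Import all_boot all_order all_algebra zify.
Import Order.TTheory GRing.Theory Num.Theory.
Section Core.
Local Open Scope ring_scope.
Lemma core (q n R : int) (d : nat -> int) (m : nat) :
  2 <= q -> (q^+2+1)*R < (q+1)*n ->
  (forall i, d i != 0) ->
  (forall i, 0 < d i -> d i.+1 = q * d i - n) ->
  (forall i, d i < 0 -> d i.+1 = q * d i + n) ->
  (forall i, d (i + m)%N = - d i) ->
  (forall i, `|d i| <= R) ->
  (forall t : int, (q+1)*t != n) ->
  (m %% 4 = 2)%N -> False.
Proof.
move=> q2 hR dn0 sp sn sh bd ndv m4.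
have bd' i : - R <= d i /\ d i <= R by have := bd i; rewrite ler_norml => /andP[].
have R0 : 0 <= R by have := bd 0%N; apply: le_trans.
have Rn : R < n.
  have : q^+2 * R >= q * R by rewrite ler_wpM2r // expr2 ler_peMl //; lia.
  nia.
have per i : d (i + 2 * m)%N = d i.
  by rewrite mul2n -addnn addnA !sh opprK.
have sgn i : 0 < d i \/ d i < 0.
  by have := dn0 i; case: (ltgtP (d i) 0) => //; [right|left].
have Q2 : q^+2 = q * q by rewrite expr2.
have q4 : q^+4 = q^+2 * q^+2 by rewrite -exprD.
have pair i : 0 < d i -> 0 < d i.+1 -> d i.+2 < 0 /\ d i.+3 < 0.
  move=> p0 p1.
  have e1 := sp _ p0; have e2 := sp _ p1.
  have hq : q^+2 * d i <= q^+2 * R by rewrite ler_wpM2l ?exprn_ge0 //; [lia | case: (bd' i)].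
  case: (sgn i.+2) => p2.
    exfalso. have e3 := sp _ p2. case: (bd' i.+2) => _ _. nia.
  split => //.
  case: (sgn i.+3) => p3 //.
  exfalso.
  have e3 := sn _ p2. have e4 := sp _ p3.
  have hq4 : q^+4 * d i <= q^+4 * R by rewrite ler_wpM2l ?exprn_ge0 //; [lia | case: (bd' i)].
  have h5 : (q^+2 - 1) * ((q^+2+1)*R) <= (q^+2 - 1) * ((q+1)*n).
    by rewrite ler_wpM2l //; [nia | exact: ltW].
  case: (bd' i.+4) => h6 _.
  nia.
have pair4 i : 0 < d i -> 0 < d i.+1 ->
   [/\ 0 < d (i + 4)%N, 0 < d (i + 4).+1 &
      (q+1)*n - (q^+2+1)* d (i+4)%N = q^+4 * ((q+1)*n - (q^+2+1)* d i)].
  move=> p0 p1.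
  have [p2 p3] := pair i p0 p1.
  have pm2 : 0 < d (i.+2 + m)%N by rewrite sh oppr_gt0.
  have pm3 : 0 < d (i.+2 + m)%N.+1 by rewrite -[(i.+2 + m).+1]/(i.+3 + m)%N sh oppr_gt0.
  have [n4 n5] := pair _ pm2 pm3.
  move: n4 n5; rewrite -[(i.+2 + m).+2]/(i.+4 + m)%N -[(i.+2 + m).+3]/(i.+4.+1 + m)%N !sh !oppr_lt0.
  rewrite !addn4 => n4 n5; split => //.
  have e1 := sp _ p0; have e2 := sp _ p1; have e3 := sn _ p2; have e4 := sn _ p3.
  rewrite e4 e3 e2 e1 q4 Q2. nia.
have m2 : (4 * (m %/ 2) = 2 * m)%N by lia.
have P1 : 1 < q ^+ (2 * m).
  have m0 : (2 * m != 0)%N by apply/eqP => m0; move: m4; have -> : m = 0%N by lia.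
  rewrite exprn_egt1 //; lia.
have nopos i : 0 < d i -> 0 < d i.+1 -> False.
  move=> p0 p1.
  have it k : [/\ 0 < d (i + 4 * k)%N, 0 < d (i + 4 * k).+1 &
      (q+1)*n - (q^+2+1)* d (i + 4 * k)%N = q^+(4 * k) * ((q+1)*n - (q^+2+1)* d i)].
    elim: k => [|k [h1 h2 h3]]; first by rewrite muln0 addn0 expr0 mul1r.
    have [h4 h5 h6] := pair4 _ h1 h2.
    have -> : (i + 4 * k.+1 = i + 4 * k + 4)%N by lia.
    split => //.
    by rewrite h6 h3 mulrA -exprD mulnS addnC.
  have [h1 _ h3] := it (m %/ 2)%N.
  move: h3; rewrite m2 per => h3.
  case: (bd' i) => _ hi.
  have : (q^+2+1) * d i <= (q^+2+1) * R by rewrite ler_wpM2l //; nia.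
  nia.
have noneg i : d i < 0 -> d i.+1 < 0 -> False.
  move=> n0 n1; apply: (nopos (i + m)%N); first by rewrite sh oppr_gt0.
  by move: (sh i.+1); rewrite addSn => ->; rewrite oppr_gt0.
have [i0 pi0] : exists i0, 0 < d i0.
  case: (sgn 0%N) => h; first by exists 0%N.
  by exists m; rewrite -[m]/(0 + m)%N sh oppr_gt0.
have alt k : 0 < d (i0 + 2 * k)%N /\ (q+1) * d (i0 + 2 * k)%N - n = q^+(2 * k) * ((q+1) * d i0 - n).
  elim: k => [|k [h1 h2]]; first by rewrite muln0 addn0 expr0 mul1r.
  have -> : (i0 + 2 * k.+1 = (i0 + 2 * k).+2)%N by lia.
  have e1 := sp _ h1.
  case: (sgn (i0 + 2 * k).+1) => h3; first by case: (nopos _ h1 h3).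
  case: (sgn (i0 + 2 * k).+2) => h4; last by case: (noneg _ h3 h4).
  have e2 := sn _ h3.
  split => //.
  rewrite e2 e1 mulnS exprD -mulrA. rewrite -h2 Q2. nia.
have [_ h] := alt m.
move: h; rewrite per => h.
have X0 : (q+1) * d i0 - n = 0 by nia.
by move: (ndv (d i0)); rewrite -subr_eq0 X0.
Qed.
End Core.
Section Z.
Local Open Scope ring_scope.
Lemma hR_lem (q n s : nat) : ((q^2+1)*n < (q+1)*n + 2*(q^2+1)*s)%N ->
  (q%:Z^+2+1)*(n%:Z - (2*s)%:Z) < (q%:Z+1)*n%:Z.
Proof. move=> h. nia. Qed.
Lemma sp_lem {p n y y' k : nat} : ((2* p)*y = k*n + y')%N -> k = p ->
  (2*y')%:Z - n%:Z = (2* p)%:Z * ((2*y)%:Z - n%:Z) - n%:Z.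
Proof. move=> e ek; subst k. nia. Qed.
Lemma sn_lem {p n y y' k : nat} : ((2* p)*y = k*n + y')%N -> (k + 1 = p)%N ->
  (2*y')%:Z - n%:Z = (2* p)%:Z * ((2*y)%:Z - n%:Z) + n%:Z.
Proof. move=> e ek; subst p. nia. Qed.
Lemma ndv_lem {q n u : nat} : (2 <= q)%N -> n = (u * (q+1) + 2)%N -> forall t : int, (q%:Z+1)*t != n%:Z.
Proof.
move=> q2 -> t; apply/eqP => e.
case: (lerP (t - u%:Z) 0) => h; nia.
Qed.
Lemma bd_lem {n s y : nat} : (s <= y)%N -> (y + s <= n)%N -> `|(2*y)%:Z - n%:Z| <= n%:Z - (2*s)%:Z.
Proof. move=> h1 h2; rewrite ler_norml; apply/andP; split; lia. Qed.
End Z.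
Lemma step_k (p n s y y' k : nat) : 0 < p -> (2* p)*y = k*n + y' -> s <= y -> y + s <= n -> s <= y' -> y' + s <= n -> ((2* p)^2+1)*n < (2* p+1)*n + 2*((2* p)^2+1)*s ->
 (n < 2*y -> k = p) /\ (2*y < n -> k + 1 = p).
Proof.
move=> p0 e sy ys sy' ys' c.
set R := n - 2 * s.
have nR : n = R + 2 * s by lia.
have c1 : ((2* p)^2+1)*R < (2* p+1)*n by nia.
have c2 : (2* p+1)*((2* p+1)*R) <= (2* p+1) * (3 * n) - 1.
  have : (2* p+1)*(2* p+1) <= 3*((2* p)^2+1) by nia.
  nia.
have c3 : (2* p+1)*R < 3*n.
  rewrite -(@ltn_pmul2l (2* p+1)); lia.
split => h.
- have k1 : k <= p.
    case: (leqP k p) => // kp.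
    have : (p+1)*n <= k*n by rewrite leq_mul2r; lia.
    nia.
  have k2 : p <= k.
    case: (leqP p k) => // kp.
    have : k*n <= (p-1)*n by rewrite leq_mul2r; lia.
    nia.
  lia.
- have k1 : k + 1 <= p.
    case: (leqP (k+1) p) => // kp.
    have : p*n <= k*n by rewrite leq_mul2r; lia.
    nia.
  have k2 : p <= k + 1.
    case: (leqP p (k+1)) => // kp.
    have : (k+2)*n <= p*n by rewrite leq_mul2r; lia.
    nia.
  lia.
Qed.
Lemma sqm1 X : 1 <= X -> X * X = (X - 1) * (X + 1) + 1.
Proof. move=> h; nia. Qed.
Lemma sum_eq_n {u v k n : nat} : u + v = k * n -> 0 < v -> v < n -> u < n -> u = n - v.
Proof. move=> e v0 vn un. have : k * n < 2 * n by lia. have : 0 < k * n by lia. move=> h1 h2. have k1 : k = 1.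
  case: k e h1 h2 => [|[|k]] //= e h1 h2; nia. subst k; lia. Qed.
Lemma cond_lem {q n s D : nat} : 2*(q^2+1)*D = q*(q-1)*n -> D < s -> 1 <= q ->
   (q^2+1)*n < (q+1)*n + 2*(q^2+1)*s.
Proof.
move=> hD Ds q1.
have h : 2 * (q ^ 2 + 1) * D < 2 * (q ^ 2 + 1) * s by rewrite ltn_pmul2l //; lia.
case: q q1 hD h => [|q'] // _; rewrite subn1 succnK => hD h.
rewrite hD in h. nia.
Qed.

Lemma modE (x M t v : nat) : x = t * M + v -> v < M -> x %% M = v.
Proof. by move=> -> h; rewrite modnMDl modn_small. Qed.

Lemma sq_mod x : 0 < x -> x^2 %% (x+1) = 1.
Proof. move=> x0; apply: (@modE _ _ (x-1)); [nia | lia]. Qed.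

Lemma even_pow x j : 0 < x -> x^(2*j) %% (x+1) = 1.
Proof.
move=> x0; rewrite expnM -modnXm sq_mod // exp1n modn_small //; lia.
Qed.

Lemma odd_pow x j : 0 < x -> x^(2*j+1) %% (x+1) = x.
Proof.
move=> x0; rewrite expnD expn1 -modnMml even_pow // mul1n modn_small //; lia.
Qed.

Lemma main_gen (p m : nat) : 0 < p -> m %% 4 = 2 -> 6 <= m ->
  let q := 2 * p in let n := q ^ m + 1 in
  2 * (q ^ 2 + 1) * delta1 q n = q * (q - 1) * (q ^ m + 1) /\
  size (cyc_coset q n (delta1 q n)) = 4.
Proof.
move=> p0 m4 m6 q n.
have q2 : 2 <= q by rewrite /q; lia.
have qm : 2 * m <= q ^ m.
  have h1 := ltn_expl (m-1) (isT : 1 < 2).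
  have h2 : 2 ^ m <= q ^ m by rewrite leq_exp2r //; lia.
  have : 2 ^ m = 2 * 2 ^ (m-1) by rewrite -expnS; congr (_ ^ _); lia.
  lia.
set j := m %/ 4.
have mj : m = 2 * (2 * j + 1) by rewrite /j; lia.
have dvd1 : n %% (q^2+1) = 0.
  rewrite /n mj expnM -modnDml odd_pow ?modnn //; lia.
have [N nN] : exists N, n = N * (q^2+1).
  by exists (n %/ (q^2+1)); rewrite {1}(divn_eq n (q^2+1)) dvd1 addn0.
have nq1 : n %% (q+1) = 2.
  rewrite /n mj -modnDml even_pow ?modn_small //; lia.
have [u nu] : exists u, n = u * (q+1) + 2.
  by exists (n %/ (q+1)); rewrite {1}(divn_eq n (q+1)) nq1.
clear dvd1 nq1.
have N0 : 0 < N by move: nN; rewrite /n; case: (N) => //; lia.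
set a := p * (q - 1).
set D := N * a.
have [p1 hp] : exists p1, p = p1 + 1 by exists (p - 1); lia.
have ha : a = (p1+1)*(2* p1+1) by rewrite /a /q hp; nia.
have q1 : q - 1 = 2 * p1 + 1 by rewrite /q hp; lia.
have hD : 2 * (q ^ 2 + 1) * D = q * (q - 1) * n by rewrite nN /D ha q1 /q hp; nia.
have fD i : (D * q ^ i) %% n = N * ((a * q ^ i) %% (q^2+1)).
  by rewrite nN /D -mulnA muln_modr.
set S := [:: a; a + 1; a + 2 * p + 1; a + 2 * p].
have aq : a + 2 * p + 1 < q ^ 2 + 1 by rewrite ha /q hp; clear -p1; nia.
have n3 : 3 < n by rewrite /n; lia.
have uniqS : uniq [seq N * x | x <- S].
  rewrite /= !inE !eqn_pmul2l //; lia.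
have rS i : (a * q ^ i.+1) %% (q^2+1) = (q * ((a * q ^ i) %% (q^2+1))) %% (q^2+1).
  by rewrite modnMmr expnS mulnCA.
have r0 : (a * q ^ 0) %% (q^2+1) = a by rewrite expn0 muln1 modn_small //; lia.
have t0 : (q * a) %% (q^2+1) = a + 1.
  apply: (@modE _ _ p1); rewrite ha /q hp; clear -p1; nia.
have t1 : (q * (a + 1)) %% (q^2+1) = a + 2 * p + 1.
  apply: (@modE _ _ p1); rewrite ha /q hp; clear -p1; nia.
have t2 : (q * (a + 2 * p + 1)) %% (q^2+1) = a + 2 * p.
  apply: (@modE _ _ p); rewrite ha /q hp; clear -p1; nia.
have t3 : (q * (a + 2 * p)) %% (q^2+1) = a.
  apply: (@modE _ _ p); rewrite ha /q hp; clear -p1; nia.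
have r1 : (a * q ^ 1) %% (q^2+1) = a + 1 by rewrite rS r0 t0.
have r2 : (a * q ^ 2) %% (q^2+1) = a + 2 * p + 1 by rewrite rS r1 t1.
have r3 : (a * q ^ 3) %% (q^2+1) = a + 2 * p by rewrite rS r2 t2.
have cyc i : (a * q ^ i) %% (q^2+1) \in S.
  elim: i => [|i IH]; first by rewrite r0 !inE eqxx.
  rewrite rS; move: IH; rewrite !inE => /or4P [] /eqP ->.
  - by rewrite t0 eqxx !orbT.
  - by rewrite t1 eqxx !orbT.
  - by rewrite t2 eqxx !orbT.
  - by rewrite t3 eqxx.
have leadD : coset_leader q n D.
  apply/allP => x; rewrite mem_undup => /mapP [i _ ->].
  rewrite fD; have := cyc i; rewrite !inE => /or4P [] /eqP ->; rewrite /D leq_mul2l; apply/orP; right;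
    by rewrite ?leqnn -?addnA ?leq_addr.
have sizeD : size (cyc_coset q n D) = 4.
  have -> : 4 = size [seq N * x | x <- S] by [].
  apply: perm_size; apply: uniq_perm; first exact: undup_uniq.
    exact: uniqS.
  move=> x; rewrite mem_undup; apply/idP/idP.
    by move=> /mapP [i _ ->]; rewrite fD map_f // cyc.
  have hi i : i < n -> (D * q ^ i) %% n \in [seq (D * q ^ i) %% n | i <- iota 0 n].
    by move=> hi; apply: map_f; rewrite mem_iota add0n hi.
  rewrite !inE => /or4P [] /eqP ->.
  - by rewrite -r0 -fD hi // (ltnW (ltnW (ltnW n3))).
  - by rewrite -r1 -fD hi // (ltnW (ltnW n3)).
  - by rewrite -r2 -fD hi // (ltnW n3).
  - by rewrite -r3 -fD hi.
clear r0 r1 r2 r3 t0 t1 t2 t3 rS.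
have Dn : D < n by rewrite nN /D ltn_pmul2l // (leq_ltn_trans _ aq) // -!addnA leq_addr.
have bound s : s < n -> coset_leader q n s -> s <= D.
  move=> sn Ls; rewrite leqNgt; apply/negP => Ds.
  clear fD cyc leadD sizeD uniqS.
  set y := fun i => (s * q ^ i) %% n.
  have yn i : y i < n by rewrite ltn_mod; lia.
  have L1 i : i < n -> s <= y i.
    move=> hi; move/allP: Ls; apply; rewrite mem_undup; apply: map_f; rewrite mem_iota; lia.
  have qmm : (q ^ (2 * m)) %% n = 1.
    rewrite mul2n -addnn expnD; apply: (@modE _ _ (q ^ m - 1)); rewrite /n.
      apply: sqm1; rewrite expn_gt0; lia.
    lia.
  have per i : y (i + 2 * m) = y i.
    by rewrite /y expnD mulnA -modnMmr qmm muln1.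
  have perk i k : y (i + k * (2 * m)) = y i.
    elim: k => [|k IH]; first by rewrite mul0n addn0.
    by rewrite mulSn addnCA addnC per IH.
  have L2 i : s <= y i.
    rewrite (divn_eq i (2 * m)) addnC perk; apply: L1.
    have : i %% (2 * m) < 2 * m by rewrite ltn_mod; lia.
    rewrite /n; lia.
  have s0 : 0 < s by lia.
  have sh i : y (i + m) = n - y i.
    have h0 : (y (i + m) + y i) %% n = 0.
      rewrite /y modnDm.
      have -> : (s * q ^ (i + m) + s * q ^ i = (s * q ^ i) * n)%N.
        by rewrite /n expnD mulnDr muln1 mulnA.
      by rewrite modnMl.
    have := divn_eq (y (i + m) + y i) n; rewrite h0 addn0 => e.
    apply: (sum_eq_n e); [have := L2 i; lia | exact: yn | exact: yn].
  have ub i : y i + s <= n by have := L2 (i + m); rewrite sh; have := yn i; lia.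
  have cond : (q^2+1)*n < (q+1)*n + 2*(q^2+1)*s.
    apply: (cond_lem hD) => //; lia.
  have yS i : y i.+1 = (q * y i) %% n by rewrite /y modnMmr expnS mulnCA.
  have stp i : (n < 2 * y i -> (q * y i) %/ n = p) /\ (2 * y i < n -> (q * y i) %/ n + 1 = p).
    apply: (@step_k p n s (y i) (y i.+1) _ p0 _ (L2 i) (ub i) (L2 i.+1) (ub i.+1) cond).
    by rewrite yS -/q mulnC -divn_eq.
  have [X hX] : exists X, n = 2 * X + 1.
    exists (p * q ^ (m - 1)); rewrite /n -[in q ^ m](subnK (_ : 1 <= m)) ?addn1 ?expnS /q; lia.
  pose d i : int := ((2 * y i)%:Z - n%:Z)%R.
  have c1 : (2 <= q%:Z)%R by lia.
  have c2 := hR_lem _ _ _ cond.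
  have c3 i : d i != 0%R.
    rewrite /d; apply/eqP => e; have := hX; lia.
  have c4 i : (0 < d i)%R -> d i.+1 = (q%:Z * d i - n%:Z)%R.
    move=> hi; rewrite /d.
    have := divn_eq (q * y i) n; rewrite -yS /q => e.
    apply: (sp_lem e); apply: (proj1 (stp i)); move: hi; rewrite /d; lia.
  have c5 i : (d i < 0)%R -> d i.+1 = (q%:Z * d i + n%:Z)%R.
    move=> hi; rewrite /d.
    have := divn_eq (q * y i) n; rewrite -yS /q => e.
    apply: (sn_lem e); apply: (proj2 (stp i)); move: hi; rewrite /d; lia.
  have c6 i : d (i + m) = (- d i)%R.
    rewrite /d sh; have := yn i; lia.
  have c7 i : (`|d i| <= n%:Z - (2 * s)%:Z)%R.
    rewrite /d; apply: bd_lem; [exact: L2 | exact: ub].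
  exact: (@core _ _ _ d m c1 c2 c3 c4 c5 c6 c7 (ndv_lem q2 nu) m4).
have -> : delta1 q n = D.
  apply/eqP; rewrite eqn_leq; apply/andP; split.
    by apply/bigmax_leqP => s Ls; apply: bound.
  exact: (@leq_bigmax_cond _ (fun s : 'I_n => coset_leader q n s) (fun s : 'I_n => nat_of_ord s) (Ordinal Dn)).
by split => //; rewrite hD.
Qed.

Theorem lemma6 (q m : nat) :
  (exists k, 0 < k /\ q = 2 ^ k) ->
  m %% 4 = 2 -> 6 <= m ->
  let n := q ^ m + 1 in
  2 * (q ^ 2 + 1) * delta1 q n = q * (q - 1) * (q ^ m + 1) /\
  size (cyc_coset q n (delta1 q n)) = 4.
Proof.
move=> [k [k0 ->]] m4 m6.
have -> : 2 ^ k = 2 * 2 ^ (k - 1) by rewrite -expnS subn1 prednK.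
by apply: main_gen; rewrite ?expn_gt0.
Qed.
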